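(* Let $G$ be a reduced torsion-free abelian group which is super directly finite. Then $r_0(G)$ is finite.
   Context: All groups are abelian. A group $G$ is directly finite if there is no decomposition $G=A\oplus C$ with $C\ne0$ and $A\cong G$; $G$ is super directly finite if every epimorphic image of $G$ is directly finite. $r_0(G)$ denotes the torsion-free rank. *)

(* Defs.v *)
From mathcomp Require Import all_boot all_order all_algebra.
Set Implicit Arguments. Unset Strict Implicit. Unset Printing Implicit Defensive.
Import GRing.Theory.
Local Open Scope ring_scope.

Definition subgroup (G : zmodType) (A : G -> Prop) : Prop :=
  A 0 /\ (forall x y, A x -> A y -> A (x - y)).

Definition additive_map (G H : zmodType) (f : G -> H) : Prop :=
  forall x y, f (x - y) = f x - f y.

Definition torsion_free (G : zmodType) : Prop :=
  forall (x : G) (n : nat), x *+ n = 0 -> n = 0%N \/ x = 0.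

Definition divisible_subgroup (G : zmodType) (D : G -> Prop) : Prop :=
  subgroup D /\ forall (x : G) (n : nat), D x -> (0 < n)%N ->
    exists y, D y /\ x = y *+ n.

Definition reduced (G : zmodType) : Prop :=
  forall D : G -> Prop, divisible_subgroup D -> forall x, D x -> x = 0.

Definition directly_finite (G : zmodType) : Prop :=
  ~ exists (A C : G -> Prop),
      [/\ subgroup A, subgroup C,
          (forall x, A x -> C x -> x = 0),
          (forall x, exists a c, [/\ A a, C c & x = a + c]) &
          (exists c, C c /\ c <> 0)] /\
          (exists g : G -> G, [/\ additive_map g, injective g &
                                 forall y, A y <-> exists x, y = g x]).

Definition super_directly_finite (G : zmodType) : Prop :=
  forall (H : zmodType) (f : G -> H),
    additive_map f -> (forall y, exists x, f x = y) -> directly_finite H.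

Definition Z_independent (G : zmodType) (k : nat) (v : 'I_k -> G) : Prop :=
  forall c : 'I_k -> int, \sum_(i < k) v i *~ c i = 0 -> forall i, c i = 0.

Definition finite_torsion_free_rank (G : zmodType) : Prop :=
  exists n : nat, forall (k : nat) (v : 'I_k -> G), Z_independent v -> (k <= n)%N.

(* Main.v *)
Require Import Defs.
From mathcomp Require Import all_boot all_order all_algebra.
From mathcomp Require Import boolp classical_sets.
Set Implicit Arguments. Unset Strict Implicit.
Import GRing.Theory Num.Theory.
Local Open Scope ring_scope.

Section Ext.
Variables (G D : zmodType).

Definition closedG (Gm : set (G * D)) :=
  forall g a h b, Gm (g, a) -> Gm (h, b) -> Gm (g - h, a - b).
Definition funcG (Gm : set (G * D)) :=
  forall g a b, Gm (g, a) -> Gm (g, b) -> a = b.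

Lemma closed0 Gm g a : closedG Gm -> Gm (g, a) -> Gm (0, 0).
Proof. by move=> cl h; have := cl _ _ _ _ h h; rewrite !subrr. Qed.

Lemma closedN Gm g a : closedG Gm -> Gm (g, a) -> Gm (- g, - a).
Proof. by move=> cl h; have := cl _ _ _ _ (closed0 cl h) h; rewrite !sub0r. Qed.

Lemma closedD Gm g a h b : closedG Gm -> Gm (g, a) -> Gm (h, b) -> Gm (g + h, a + b).
Proof. by move=> cl h1 h2; have := cl _ _ _ _ h1 (closedN cl h2); rewrite !opprK. Qed.

Lemma closedMn Gm g a (n : nat) : closedG Gm -> Gm (g, a) -> Gm (g *+ n, a *+ n).
Proof.
move=> cl h; elim: n => [|n IH]; first by rewrite !mulr0n; exact: closed0 cl h.
by rewrite !mulrS; apply: closedD.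
Qed.

Lemma closedMz Gm g a (z : int) : closedG Gm -> Gm (g, a) -> Gm (g *~ z, a *~ z).
Proof.
move=> cl h; case: z => n; first by rewrite -!pmulrn; apply: closedMn.
by rewrite !NegzE !mulrNz -!pmulrn; apply: closedN => //; apply: closedMn.
Qed.

Hypothesis Ddiv : forall (a : D) (n : nat), (0 < n)%N -> exists e, e *+ n = a.

Lemma extend (Gm : set (G * D)) g :
  closedG Gm -> funcG Gm -> (exists a, Gm (0, a)) ->
  ~ (exists a, Gm (g, a)) ->
  exists Gm' : set (G * D), [/\ closedG Gm', funcG Gm',
     (forall p, Gm p -> Gm' p) & exists a, Gm' (g, a)].
Proof.
move=> cl fn [a0 h0] ng.
have h00 : Gm (0, 0) := closed0 cl h0.
pose dom h := exists a, Gm (h, a).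
have [e key] : exists e, forall (k : int) b, Gm (g *~ k, b) -> b = e *~ k.
  have [[n Pn]|noP] := pselect (exists n, `[< (0 < n)%N /\ dom (g *+ n) >]).
    pose P := fun n => `[< (0 < n)%N /\ dom (g *+ n) >].
    have exP : exists n, P n by exists n.
    case: (ex_minnP exP) => m /asboolP [m0 [am ham]] mmin.
    have [e he] := Ddiv am m0.
    exists e => k b hk.
    have hm0 : (m%:Z != 0) by rewrite eqz_nat -lt0n.
    have hq := closedMz (k %/ m)%Z cl ham.
    have hr := cl _ _ _ _ hk hq.
    have er : g *~ k - g *+ m *~ (k %/ m)%Z = g *~ (k %% m)%Z.
      rewrite {1}(divz_eq k m) mulrzDr pmulrn -mulrzA mulrC.
      by rewrite addrAC subrr add0r.
    rewrite er in hr.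
    have r0 := modz_ge0 k hm0.
    have rlt : (k %% m)%Z < m by apply: ltz_pmod; rewrite ltz_nat.
    move: r0 rlt hr; case E: (k %% m)%Z => [r|//] _ rlt hr.
    have r0 : r = 0%N.
      apply/eqP; apply: contraT; rewrite -lt0n => rpos.
      have : (m <= r)%N.
        by apply: mmin; apply/asboolP; split => //; exists (b - am *~ (k %/ m)%Z); rewrite pmulrn.
      by rewrite leqNgt -ltz_nat rlt.
    subst r; move: hr; rewrite mulr0z => hr.
    have := fn _ _ _ hr h00; move/eqP; rewrite subr_eq0 => /eqP ->.
    have km : k = (k %/ m)%Z * m by rewrite {1}(divz_eq k m) E addr0.
    by rewrite [in RHS]km (mulrC _ m%:Z) mulrzA -pmulrn he.
  exists 0 => k b hk; rewrite mul0rz.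
  case: k hk => n hk.
    case: n hk => [|n] hk; first by rewrite mulr0z in hk; exact: fn hk h00.
    by exfalso; apply: noP; exists n.+1; apply/asboolP; split => //; exists b; rewrite pmulrn.
  exfalso; apply: noP; exists n.+1; apply/asboolP; split => //.
  by exists (- b); have := closedN cl hk; rewrite NegzE mulrNz opprK pmulrn.
exists (fun p => exists s a k, Gm (s, a) /\ p = (s + g *~ k, a + e *~ k)).
split.
- move=> _ _ _ _ [s [a [k [hs [-> ->]]]]] [s' [a' [k' [hs' [-> ->]]]]].
  exists (s - s'), (a - a'), (k - k'); split; first exact: cl.
  by congr (_, _); rewrite mulrzBr opprD addrACA.
- move=> _ _ _ [s [a [k [hs [-> ->]]]]] [s' [a' [k' [hs' [E ->]]]]].
  have h := cl _ _ _ _ hs' hs.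
  have E' : s' - s = g *~ (k - k').
    have sE : s' = s + g *~ k - g *~ k' by rewrite E addrK.
    by rewrite sE addrAC (addrC s) addrK mulrzBr.
  rewrite E' in h; have := key _ _ h; rewrite mulrzBr => /eqP.
  rewrite subr_eq => /eqP ->. by rewrite addrAC subrK addrC.
- move=> [s a] h; exists s, a, 0; split => //; by rewrite !mulr0z !addr0.
- by exists e, 0, 0, 1; split => //; rewrite !add0r !mulr1z.
Qed.


Lemma padS (M : zmodType) (y : nat -> M) (c : nat -> int) k K : (k <= K)%N ->
  \sum_(i < k) y i *~ c i = \sum_(i < K) y i *~ (if (i < k)%N then c i else 0).
Proof.
move=> hk; rewrite (big_ord_widen K (fun i => y i *~ c i) hk) big_mkcond.
by apply: eq_bigr => i _; case: ifP => _ //; rewrite mulr0z.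
Qed.

Lemma sum_single (M : zmodType) (y : nat -> M) n :
  \sum_(i < n.+1) y i *~ ((i : nat) == n)%:Z = y n.
Proof.
rewrite big_ord_recr /= eqxx mulr1z big1 ?add0r // => i _.
by rewrite (ltn_eqF (ltn_ord i)) mulr0z.
Qed.

Variables (x : nat -> G) (d : nat -> D).
Hypothesis hind : forall k, Z_independent (fun i : 'I_k => x i).

Definition G0 : set (G * D) := fun p => exists k (c : nat -> int),
  p = (\sum_(i < k) x i *~ c i, \sum_(i < k) d i *~ c i).

Lemma G0_closed : closedG G0.
Proof.
move=> g a h b [k [c E1]] [k' [c' E2]]; case: E1 => -> ->; case: E2 => -> ->.
pose K := maxn k k'.
exists K, (fun i => (if (i < k)%N then c i else 0) - (if (i < k')%N then c' i else 0)).
rewrite (padS x c (leq_maxl k k')) (padS x c' (leq_maxr k k')).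
rewrite (padS d c (leq_maxl k k')) (padS d c' (leq_maxr k k')).
by rewrite -!sumrB; congr (_, _); apply: eq_bigr => i _; rewrite mulrzBr.
Qed.

Lemma G0_func : funcG G0.
Proof.
move=> g a b [k [c E1]] [k' [c' E2]]; case: E1 => Eg ->; case: E2 => E ->; rewrite E in Eg; symmetry in Eg; clear E; move: Eg => E.
rewrite (padS x c (leq_maxl k k')) (padS x c' (leq_maxr k k')) in E.
rewrite (padS d c (leq_maxl k k')) (padS d c' (leq_maxr k k')).
pose K := maxn k k'.
have := @hind K (fun i => (if (i < k)%N then c i else 0) - (if (i < k')%N then c' i else 0)).
move=> H; apply/eqP; rewrite -subr_eq0 -sumrB; apply/eqP; apply: big1 => i _.
rewrite -mulrzBr H ?mulr0z //.
by rewrite (eq_bigr (fun i : 'I_K => x i *~ (if (i < k)%N then c i else 0) - x i *~ (if (i < k')%N then c' i else 0))) ?sumrB ?E ?subrr // => j _; rewrite mulrzBr.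
Qed.

Definition validG (Gm : set (G * D)) := [/\ closedG Gm, funcG Gm & forall p, G0 p -> Gm p].

Lemma exists_hom : exists f : G -> D, additive_map f /\ forall i, f (x i) = d i.
Proof.
pose T := {Gm : set (G * D) | validG Gm}.
have v0 : validG G0 by split => //; [exact: G0_closed | exact: G0_func].
pose R := fun s t : T => `[< forall p, sval s p -> sval t p >].
have [[Gm vG] maxG] : exists t : T, premaximal (fun a b => R a b) t.
  apply: (ZL_preorder (exist _ G0 v0)).
  - by move=> t; apply/asboolP.
  - by move=> r s t /asboolP h1 /asboolP h2; apply/asboolP => p /h1 /h2.
  move=> A tot.
  have [[t0 At0]|nA] := pselect (exists t, A t); last first.
    by exists (exist _ G0 v0) => s As; exfalso; apply: nA; exists s.
  have vU : validG (fun p => exists t, A t /\ sval t p).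
    split.
    - move=> g a h b [t1 [A1 h1]] [t2 [A2 h2]].
      have [/asboolP l|/asboolP l] := tot _ _ A1 A2.
        by exists t2; split => //; case: t2 {A2 l} (l _ h1) h2 => Gm [cl fn sb] /= h1' h2; apply: cl.
      by exists t1; split => //; case: t1 {A1 l} h1 (l _ h2) => Gm [cl fn sb] /= h1 h2'; apply: cl.
    - move=> g a b [t1 [A1 h1]] [t2 [A2 h2]].
      have [/asboolP l|/asboolP l] := tot _ _ A1 A2.
        by case: t2 {A2 l} (l _ h1) h2 => Gm [cl fn sb] /= h1' h2; apply: fn h1' h2.
      by case: t1 {A1 l} h1 (l _ h2) => Gm [cl fn sb] /= h1 h2'; apply: fn h1 h2'.
    - by move=> p hp; exists t0; split => //; case: t0 At0 => Gm [cl fn sb] /= _; apply: sb.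
  by exists (exist _ _ vU) => s As; apply/asboolP => p hp; exists s.
have [cl fn sub] := vG.
have tot : forall g, exists a, Gm (g, a).
  move=> g; apply: contrapT => ng.
  have h0 : exists a, Gm (0, a).
    by exists 0; apply: sub; exists 0%N, (fun _ => 0); rewrite !big_ord0.
  have [Gm' [cl' fn' sub' [a ha]]] := extend cl fn h0 ng.
  have v' : validG Gm' by split => // p /sub /sub'.
  have /asboolP h := maxG (exist _ Gm' v') (introT (asboolP _) sub').
  by apply: ng; exists a; apply: h.
pose f g := sval (cid (tot g)).
have hf g : Gm (g, f g) by rewrite /f; case: cid.
exists f; split.
- by move=> g h; apply: fn (hf (g - h)) _; apply: cl.
- move=> i; apply: fn (hf (x i)) _; apply: sub; exists i.+1, (fun j => (j == i)%:Z).
  by rewrite !sum_single.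
Qed.
End Ext.
Lemma poly_not_df : ~ directly_finite {poly rat}.
Proof.
apply; exists (fun p : {poly rat} => p`_0 = 0), (fun p : {poly rat} => exists c, p = c%:P).
split; first split.
- by split; [rewrite coef0 | move=> x y hx hy; rewrite coefB hx hy subr0].
- by split; [exists 0; rewrite polyC0 | move=> x y [a ->] [b ->]; exists (a - b); rewrite polyCB].
- by move=> x hx [c hc]; move: hx; rewrite hc coefC /= => ->.
- move=> x; exists (x - (x`_0)%:P), (x`_0)%:P; split => //; last by rewrite subrK.
  + by rewrite coefB coefC /= subrr.
  + by exists x`_0.
- by exists 1; split; [exists 1 | apply/eqP; rewrite oner_eq0].
exists (fun p => p * 'X); split.
- by move=> x y; rewrite mulrBl.
- by apply: mulIf; rewrite polyX_eq0.
- move=> y; split.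
  + move=> hy; have : root y 0 by rewrite /root horner_coef0 hy.
    by move/factor_theorem => [q ->]; exists q; rewrite subr0.
  + by move=> [x ->]; rewrite coefMX.
Qed.
Section Rank.
Variable G : zmodType.

Lemma bounded m (y : nat -> G) :
  (forall g : G, exists n : int, n != 0 /\ exists a : 'I_m -> int, g *~ n = \sum_(i < m) y i *~ a i) ->
  forall k (w : 'I_k -> G), Z_independent w -> (k <= m)%N.
Proof.
move=> hyp k w hw; rewrite leqNgt; apply/negP => hk.
have [N [A hNA]] : exists (N : 'I_k -> int) (A : 'I_k -> 'I_m -> int),
    forall j, N j != 0 /\ w j *~ N j = \sum_(i < m) y i *~ A j i.
  pose P j := cid (hyp (w j)).
  exists (fun j => sval (P j)), (fun j => sval (cid (proj2 (svalP (P j))))).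
  move=> j; split; first exact: (proj1 (svalP (P j))).
  exact: (svalP (cid (proj2 (svalP (P j))))).
pose M : 'M[rat]_(k, m) := \matrix_(j, i) (A j i)%:~R.
have rk : (0 < \rank (kermx M))%N.
  rewrite mxrank_ker subn_gt0; apply: leq_ltn_trans hk; exact: rank_leq_col.
have [j0 hj0] : exists j0, row j0 (kermx M) != 0.
  apply: contrapT => hn; move: rk; rewrite lt0n mxrank_eq0 => /eqP; apply.
  apply/row_matrixP => j; rewrite row0; apply/eqP; apply: contrapT => hj.
  by apply: hn; exists j; apply/negP.
pose u := row j0 (kermx M).
have uM : u *m M = 0 by apply/sub_kermxP; exact: row_sub.
have [j1 hj1] : exists j1, u 0 j1 != 0.
  apply: contrapT => hn; move/eqP: hj0; apply; apply/rowP => j; rewrite [RHS]mxE.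
  by apply/eqP; apply: contrapT => hj; apply: hn; exists j; apply/negP.
pose c j := numq (u 0 j) * \prod_(j' | j' != j) denq (u 0 j').
pose Nr : rat := \prod_j (denq (u 0 j))%:~R.
have hc j : (c j)%:~R = u 0 j * Nr.
  rewrite /c intrM rmorph_prod numqE /Nr [in RHS](bigD1 j) //= mulrA.
  by congr (_ * _); apply: eq_bigr.
have Nr0 : Nr != 0 by apply/prodf_neq0 => j _; rewrite intr_eq0 denq_neq0.
have hci i : \sum_j c j * A j i = 0.
  apply: (@intr_inj rat); rewrite rmorph_sum /= rmorph0.
  under eq_bigr => j _ do rewrite intrM hc mulrAC.
  rewrite -mulr_suml; apply/eqP; rewrite mulf_eq0; apply/orP; left.
  move/matrixP: uM => /(_ 0 i); rewrite !mxE => E.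
  by apply/eqP; rewrite -[RHS]E; apply: eq_bigr => j _; rewrite /u /M !mxE.
have rel : \sum_(j < k) w j *~ (N j * c j) = 0.
  under eq_bigr => j _ do rewrite mulrzA (proj2 (hNA j)) mulrz_suml.
  rewrite exchange_big /=; apply: big1 => i _.
  under eq_bigr => j _ do rewrite -mulrzA.
  by rewrite -mulrz_sumr (eq_bigr (fun j => c j * A j i)) ?hci ?mulr0z // => j _; rewrite mulrC.
have := hw _ rel j1; move/eqP; rewrite mulf_eq0 (negbTE (proj1 (hNA j1))) /=.
move/eqP => cj1; move: (hc j1); rewrite cj1 rmorph0 => /esym/eqP.
by rewrite mulf_eq0 (negbTE hj1) (negbTE Nr0).
Qed.


Definition extf (y : nat -> G) m g := fun i => if (i < m)%N then y i else g.

Lemma span_or_ext (y : nat -> G) m g :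
  Z_independent (fun i : 'I_m => y i) ->
  ~ Z_independent (fun i : 'I_m.+1 => extf y m g i) ->
  exists n : int, n != 0 /\ exists a : 'I_m -> int, g *~ n = \sum_(i < m) y i *~ a i.
Proof.
move=> hy hn.
have [c [hc [i0 hi0]]] : exists c : 'I_m.+1 -> int,
    \sum_(i < m.+1) extf y m g i *~ c i = 0 /\ exists i, c i != 0.
  apply: contrapT => hne; apply: hn => c hc i; apply/eqP; apply: contrapT => hi.
  by apply: hne; exists c; split => //; exists i; apply/negP.
move: hc; rewrite big_ord_recr /= /extf ltnn.
under eq_bigr => i _ do rewrite /= (ltn_ord i).
move=> hc.
have [cm|cm] := eqVneq (c ord_max) 0.
  exfalso; move: hc; rewrite cm mulr0z addr0 => hc.
  have h := hy (fun i => c (widen_ord (leqnSn m) i)) hc.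
  move: hi0; case: (unliftP ord_max i0) => [j ->|->]; last by rewrite cm eqxx.
  have -> : lift ord_max j = widen_ord (leqnSn m) j by apply: val_inj; rewrite /= /bump leqNgt ltn_ord.
  by rewrite h eqxx.
exists (c ord_max); split => //.
exists (fun i => - c (widen_ord (leqnSn m) i)).
under eq_bigr => i _ do rewrite mulrNz.
by rewrite sumrN; apply/eqP; rewrite -addr_eq0 addrC hc.
Qed.

Hypothesis hr : ~ finite_torsion_free_rank G.

Lemma next_ext (y : nat -> G) m :
  Z_independent (fun i : 'I_m => y i) ->
  exists g, Z_independent (fun i : 'I_m.+1 => extf y m g i).
Proof.
move=> hy; apply: contrapT => hn.
have hs : forall g : G, exists n : int, n != 0 /\ exists a : 'I_m -> int, g *~ n = \sum_(i < m) y i *~ a i.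
  move=> g; apply: span_or_ext hy _ => hg; apply: hn; exists g; exact: hg.
apply: hr; exists m => k v hv; exact: (@bounded m y hs k v hv).
Qed.

Definition nxt (y : nat -> G) m : G :=
  match pselect (exists g, Z_independent (fun i : 'I_m.+1 => extf y m g i)) with
  | left H => sval (cid H)
  | right _ => 0
  end.

Fixpoint seqF (n : nat) : nat -> G :=
  match n with
  | 0 => fun _ => 0
  | n.+1 => extf (seqF n) n (nxt (seqF n) n)
  end.

Lemma seqF_ind n : Z_independent (fun i : 'I_n => seqF n i).
Proof.
elim: n => [|n IH].
  by move=> c _ [].
rewrite /= /nxt; case: pselect => [H|H]; first by case: cid.
by exfalso; apply: H; apply: next_ext.
Qed.

Lemma seqF_stable n i : (i < n)%N -> seqF n i = seqF i.+1 i.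
Proof.
elim: n => [//|n IH] hi.
rewrite ltnS leq_eqVlt in hi; case/orP: hi => [/eqP ->//|hi].
by rewrite /= /extf hi IH.
Qed.

Lemma indep_seq : exists x : nat -> G, forall k, Z_independent (fun i : 'I_k => x i).
Proof.
exists (fun i => seqF i.+1 i) => k.
have -> : (fun i : 'I_k => seqF i.+1 i) = (fun i : 'I_k => seqF k i).
  by apply: funext => i; rewrite seqF_stable.
exact: seqF_ind.
Qed.
End Rank.

Theorem proposition5p3 (G : zmodType) :
  reduced G -> torsion_free G -> super_directly_finite G ->
  finite_torsion_free_rank G.
Proof.
move=> _ _ hsdf; apply: contrapT => hr.
have [x hx] := indep_seq hr.
pose d (i : nat) : {poly rat} := odflt 0 (unpickle i).
have Ddiv : forall (a : {poly rat}) (n : nat), (0 < n)%N -> exists e, e *+ n = a.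
  move=> a n hn; exists ((n%:R)^-1 *: a).
  by rewrite -scaler_nat scalerA mulfV ?scale1r // pnatr_eq0 -lt0n.
have [f [hf hfx]] := @exists_hom G _ Ddiv x d hx.
apply: poly_not_df; apply: (hsdf _ f hf) => y.
by exists (x (pickle y)); rewrite hfx /d pickleK.
Qed.
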